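(* Let $v_1,v_2,v_3$ be positive integers with $\gcd(v_1,v_2,v_3)=1$, and suppose that no two of these speeds have a common factor greater than $2$ (i.e. $\gcd(v_i,v_j)\le 2$ for $i\ne j$). Let $r=\left\lfloor\frac{v_1+v_2}{3}\right\rfloor$, and let $L=\max_{m\in\mathbb{Z}}\min_{1\le i\le 3}\left\Vert \frac{m}{v_1+v_2}v_i\right\Vert$ be the maximum loneliness achieved at a time of the form $t=\frac{m}{v_1+v_2}$ with $m\in\mathbb{Z}$. Then: if $v_3$ is a multiple of $v_1+v_2$, then $L=0$; and if $v_3$ is not a multiple of $v_1+v_2$, then $L\ge\frac{r}{v_1+v_2}$.
   Context: For a real number $x$, $\Vert x\Vert$ denotes the distance from $x$ to the nearest integer. *)

(* Defs.v *)
From mathcomp Require Import all_boot all_order all_algebra.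
Set Implicit Arguments. Unset Strict Implicit. Unset Printing Implicit Defensive.
Import Order.TTheory GRing.Theory Num.Theory.
Local Open Scope ring_scope.

Definition dist_nearest_int (x : rat) : rat :=
  Num.min (x - (Num.floor x)%:~R) ((Num.floor x + 1)%:~R - x).

Definition loneliness_at (v1 v2 v3 : nat) (m : int) : rat :=
  let N : rat := (v1 + v2)%:R in
  Num.min (dist_nearest_int (m%:~R * v1%:R / N))
    (Num.min (dist_nearest_int (m%:~R * v2%:R / N))
             (dist_nearest_int (m%:~R * v3%:R / N))).

Definition is_max_loneliness (v1 v2 v3 : nat) (L : rat) : Prop :=
  (exists m : int, loneliness_at v1 v2 v3 m = L) /\
  (forall m : int, loneliness_at v1 v2 v3 m <= L).

(* Main.v *)
Require Import Defs.
From mathcomp Require Import all_boot all_order all_algebra.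
Import Order.TTheory GRing.Theory Num.Theory.
Local Open Scope ring_scope.
From mathcomp Require Import zify ring lra.
From Stdlib Require Import Classical.

Set Implicit Arguments. Unset Strict Implicit. Unset Printing Implicit Defensive.
Local Open Scope nat_scope.

Lemma walk (f : nat -> nat) (A B n : nat) :
  (forall j, j < n -> f j.+1 + A = f j + B) -> f n + n * A = f 0 + n * B.
Proof.
elim: n => [|n IH] H; first by rewrite !mul0n !addn0.
have := H n (ltnSn n); have := IH (fun j hj => H j (ltnW (leq_trans hj (leqnn _)))).
rewrite !mulSn; lia.
Qed.

Lemma step_mod (N c x : nat) : 0 < N -> c < N ->
  ((x %% N + c) %% N = x %% N + c) \/ ((x %% N + c) %% N + N = x %% N + c).
Proof.
move=> N0 cN; have t := ltn_pmod x N0.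
case: (ltnP (x %% N + c) N) => h; first by left; rewrite modn_small.
right; have -> : x %% N + c = (x %% N + c - N) + N by lia.
rewrite modnDr modn_small; lia.
Qed.

Lemma key (N c : nat) : 0 < c < N ->
  exists k, N %/ 3 <= k <= N - N %/ 3 /\ N %/ 3 <= (k * c) %% N <= N - N %/ 3.
Proof.
move=> /andP[c0 cN].
have N0 : 0 < N by lia.
set r := N %/ 3.
have hr : 3 * r <= N < 3 * r + 3 by rewrite /r; lia.
case: (classic (exists k, r <= k <= N - r /\ r <= (k * c) %% N <= N - r)) => // Hn.
exfalso.
have H : forall k, r <= k <= N - r -> (k*c) %% N < r \/ N - r < (k*c) %% N.
  move=> k hk; case: (ltnP ((k*c) %% N) r) => h1; first by left.
  case: (ltnP (N - r) ((k*c) %% N)) => h2; first by right.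
  by exfalso; apply: Hn; exists k; rewrite hk h1 h2.
case r0 : (r == 0).
  by apply: Hn; exists 0; move/eqP: r0 => ->; rewrite mod0n; lia.
move/negbT: r0; rewrite -lt0n => r0.
pose Y k := if (k*c) %% N < r then (k*c) %% N + N else (k*c) %% N.
have HY : forall k, r <= k <= N - r -> N - r < Y k < N + r.
  move=> k hk; have := H k hk; have := ltn_pmod (k*c) N0; rewrite /Y.
  case: ifP => hh; lia.
have step : forall k, r <= k -> k.+1 <= N - r -> Y k.+1 = Y k + c \/ Y k.+1 + N = Y k + c.
  move=> k h1 h2.
  have e : (k.+1 * c) %% N = ((k * c) %% N + c) %% N by rewrite mulSn addnC modnDml.
  have := H k ltac:(lia); have := H k.+1 ltac:(lia).
  have := step_mod (k*c) N0 cN. rewrite /Y -e.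
  have := ltn_pmod (k*c) N0; have := ltn_pmod (k.+1*c) N0.
  case: ifP => hh1; case: ifP => hh2; lia.
set n := N - 2 * r.
have nr : r <= n by lia.
case: (leqP (2 * r - 1) c) => hA.
  (* all steps down *)
  have W := @walk (fun j => Y (r + j)) N c n.
  have W' : Y (r + n) + n * N = Y (r + 0) + n * c.
    apply: W => j hj; have := step (r + j) ltac:(lia) ltac:(lia).
    have := HY (r + j) ltac:(lia); have := HY (r + j).+1 ltac:(lia).
    rewrite addnS; lia.
  have := HY (r + n) ltac:(lia); have := HY (r + 0) ltac:(lia).
  move=> h1 h2.
  have cN1 : c = N - 1.
    have : n * (N - c) <= 2 * r - 2 by nia.
    nia.
  have : (r * c) %% N = N - r.
    have -> : r * c = (r - 1) * N + (N - r) by rewrite cN1; nia.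
    by rewrite modnMDl modn_small; lia.
  have := H r ltac:(lia); lia.
case: (leqP (2 * r - 1) (N - c)) => hB.
  have W := @walk (fun j => Y (r + j)) 0 c n.
  have W' : Y (r + n) + n * 0 = Y (r + 0) + n * c.
    apply: W => j hj; have := step (r + j) ltac:(lia) ltac:(lia).
    have := HY (r + j) ltac:(lia); have := HY (r + j).+1 ltac:(lia).
    rewrite addnS; lia.
  have := HY (r + n) ltac:(lia); have := HY (r + 0) ltac:(lia).
  move=> h1 h2.
  have c1 : c = 1 by nia.
  have : (r * c) %% N = r by rewrite c1 muln1 modn_small; lia.
  have := H r ltac:(lia); lia.
case: (eqVneq (2 * c) N) => h2c.
  apply: Hn.
  pose k := if odd r then r else r.+1.
  exists k; have ok : odd k by rewrite /k; case: ifP => //= ->.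
  have -> : (k * c) %% N = c.
    have -> : k * c = k./2 * N + c.
      rewrite -h2c; have := odd_double_half k; rewrite ok -muln2 => hk; nia.
    by rewrite modnMDl modn_small.
  rewrite /k; case: ifP => _; lia.
have two : forall k, r <= k -> k.+2 <= N - r -> Y k.+2 + N = Y k + 2 * c.
  move=> k h1 h2; have := step k h1 ltac:(lia); have := step k.+1 ltac:(lia) h2.
  have := HY k ltac:(lia); have := HY k.+1 ltac:(lia); have := HY k.+2 ltac:(lia).
  lia.
set J := (N - 2 * r - 2) %/ 2.
have hJ : 2 * J + 2 <= n /\ n <= 2 * J + 3 by rewrite /J; lia.
have W : forall s, s <= 2 -> Y (r + s + 2 * J) + J * N = Y (r + s) + J * (2 * c).
  move=> s hs.
  have := @walk (fun j => Y (r + s + 2 * j)) N (2 * c) J.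
  rewrite muln0 addn0; apply => j hj.
  have := two (r + s + 2 * j) ltac:(lia) ltac:(lia).
  by have -> : r + s + 2 * j.+1 = (r + s + 2 * j).+2 by lia.
have W0 := W 0 isT; have W1 := W 1 isT; have W2 := W 2 isT.
rewrite addn0 in W0.
have := HY r ltac:(lia); have := HY (r+1) ltac:(lia); have := HY (r+2) ltac:(lia).
have := HY (r + 2 * J) ltac:(lia); have := HY (r+1 + 2 * J) ltac:(lia);
have := HY (r+2 + 2 * J) ltac:(lia).
have := step r ltac:(lia) ltac:(lia); rewrite -addn1.
have := two r ltac:(lia) ltac:(lia); rewrite -(addn2 r).
have hP : (N < 2 * c -> J * N + J <= J * (2 * c)) /\ (2 * c < N -> J * (2 * c) + J <= J * N) by split; nia.
move: hP; rewrite neq_ltn in h2c; move: h2c.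
lia.
Qed.

Lemma key2 (M w : nat) : 0 < M ->
  exists k, (2 * M) %/ 3 <= 2 * k <= 2 * M - (2 * M) %/ 3 /\
   ((k * w) %% M <= M - (2 * M) %/ 3 \/ (2 * M) %/ 3 <= (k * w) %% M).
Proof.
move=> M0.
set r := (2 * M) %/ 3.
have hr : 3 * r <= 2 * M < 3 * r + 3 by rewrite /r; lia.
case: (classic (exists k, r <= 2 * k <= 2 * M - r /\
   ((k * w) %% M <= M - r \/ r <= (k * w) %% M))) => // Hn.
exfalso.
have H : forall k, r <= 2 * k <= 2 * M - r -> M - r < (k*w) %% M < r.
  move=> k hk; case: (ltnP (M - r) ((k*w) %% M)) => h1; last first.
    by exfalso; apply: Hn; exists k; split=> //; left.
  case: (ltnP ((k*w) %% M) r) => h2; first by apply/andP.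
  by exfalso; apply: Hn; exists k; split=> //; right.
set k0 := (r + 1) %/ 2.
set n := (2 * M - r) %/ 2 - k0.
have hn : M - r - 1 <= n /\ r <= 2 * k0 /\ 2 * (k0 + n) <= 2 * M - r by rewrite /n /k0; lia.
have wM := ltn_pmod w M0.
have step : forall j, j < n -> ((k0 + j.+1) * w) %% M = ((k0 + j) * w) %% M + w %% M \/
     ((k0 + j.+1) * w) %% M + M = ((k0 + j) * w) %% M + w %% M.
  move=> j hj; have -> : (k0 + j.+1) * w = (k0 + j) * w + w by rewrite addnS mulSn addnC.
  by rewrite -modnDm; apply: step_mod.
have hk0 := H k0 ltac:(lia).
case: (leqP (w %% M) (2 * r - M - 2)) => hA.
  have W : ((k0 + n) * w) %% M + n * 0 = ((k0 + 0) * w) %% M + n * (w %% M).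
    apply: (@walk (fun j => ((k0 + j) * w) %% M)) => j hj.
    have := step j hj; have := H (k0 + j) ltac:(lia); have := H (k0 + j.+1) ltac:(lia).
    move: (((k0 + j) * w) %% M) (((k0 + j.+1) * w) %% M) (w %% M) hA wM => a b ww; clear.
    Timeout 20 lia.
  rewrite addn0 in W.
  have := H (k0 + n) ltac:(lia).
  case w0 : (w %% M == 0).
    have : (k0 * w) %% M = 0 by rewrite -modnMmr (eqP w0) muln0 mod0n.
    lia.
  move/negbT: w0; rewrite -lt0n => w0.
  have : n * (w %% M) >= n by nia.
  lia.
case: (leqP (M - w %% M) (2 * r - M - 2)) => hB.
  have W : ((k0 + n) * w) %% M + n * M = ((k0 + 0) * w) %% M + n * (w %% M).
    apply: (@walk (fun j => ((k0 + j) * w) %% M)) => j hj.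
    have := step j hj; have := H (k0 + j) ltac:(lia); have := H (k0 + j.+1) ltac:(lia).
    move: (((k0 + j) * w) %% M) (((k0 + j.+1) * w) %% M) (w %% M) hA wM => a b ww; clear.
    Timeout 20 lia.
  rewrite addn0 in W.
  have := H (k0 + n) ltac:(lia).
  have : n * (w %% M) + n <= n * M by rewrite addnC -mulnS leq_mul2l wM orbT.
  lia.
have := step 0 ltac:(lia); have := H (k0 + 0) ltac:(lia); have := H (k0 + 1) ltac:(lia).
lia.
Qed.

Lemma ar1 k al E M v3 q t : k * (al * v3) = q * M + t -> (k * al + E * M) * v3 = (q + E * v3) * M + t.
Proof. move=> h. rewrite mulnDl -mulnA h. lia. Qed.
Lemma ar2 (X B h M t : nat) : X = B + h * 2 -> X * M + t = h * (2 * M) + (t + B * M).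
Proof. move=> ->. lia. Qed.

Definition goodn (N x : nat) := N %/ 3 <= x %% N <= N - N %/ 3.

Lemma good_sym N x y : 0 < N -> (x + y) %% N = 0 -> goodn N x -> goodn N y.
Proof.
move=> N0 h; rewrite /goodn.
have : (x %% N + y %% N) %% N = 0 by rewrite modnDm.
move/eqP; rewrite -/(dvdn N _) => /dvdnP [q hq].
have := ltn_pmod x N0; have := ltn_pmod y N0.
move: (x %% N) (y %% N) hq => a b hq ha hb.
have : q < 2 by nia.
case: q hq => [|[|//]] hq _; lia.
Qed.

Lemma good_small N k : 0 < N -> N %/ 3 <= k <= N - N %/ 3 -> goodn N k.
Proof.
move=> N0 hk; rewrite /goodn.
case: (ltnP k N) => h; first by rewrite modn_small.
have -> : k = N by lia.
rewrite modnn; lia.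
Qed.

Lemma comb (v1 v2 v3 : nat) : 0 < v1 -> 0 < v2 ->
  gcdn (gcdn v1 v2) v3 = 1 -> gcdn v1 v2 <= 2 -> ~~ ((v1 + v2) %| v3) ->
  exists m, goodn (v1 + v2) (m * v1) /\ goodn (v1 + v2) (m * v2) /\ goodn (v1 + v2) (m * v3).
Proof.
move=> h1 h2 hg h12 hnd.
set N := v1 + v2.
have N0 : 0 < N by rewrite /N; lia.
suff [m [g1 g3]] : exists m, goodn N (m * v1) /\ goodn N (m * v3).
  exists m; split => //; split => //.
  apply: (good_sym N0 _ g1).
  by rewrite -mulnDr -/N modnMl.
have gpos : 0 < gcdn v1 v2 by rewrite gcdn_gt0 h1.
have gN : gcdn v1 N = gcdn v1 v2 by rewrite /N gcdnDl.
case g1 : (gcdn v1 v2 == 1).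
  move/eqP: g1 => g1.
  have [a _ ha] := Bezoutl v1 N0.
  rewrite gcdnC gN g1 in ha.
  set c := (a * v3) %% N.
  have c0 : 0 < c.
    rewrite lt0n; apply/negP => /eqP c0.
    move: hnd; apply/negP; rewrite negbK.
    have d1 : N %| v3 * (1 + a * v1) by apply: dvdn_mull.
    have d2 : N %| (a * v3) * v1 by apply: dvdn_mulr; apply/eqP.
    have e : v3 * (1 + a * v1) = v3 + (a * v3) * v1 by rewrite mulnDr muln1; lia.
    by rewrite e dvdn_addl in d1.
  have hc : 0 < c < N by rewrite c0 /c ltn_pmod.
  have [k [hk hkc]] := key hc.
  exists (k * a); split.
    apply: (good_sym N0 _ (good_small N0 hk)).
    have -> : k + k * a * v1 = k * (1 + a * v1) by rewrite mulnDr muln1 mulnA.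
    by apply/eqP; rewrite -/(dvdn N _); apply: dvdn_mull.
  by rewrite /goodn -mulnA -modnMmr.
have g2 : gcdn v1 v2 = 2 by move/negbT: g1; lia.
have ev1 : 2 %| v1 by rewrite -g2 dvdn_gcdl.
have ev2 : 2 %| v2 by rewrite -g2 dvdn_gcdr.
move: ev1 ev2 => /dvdnP [a' ha'] /dvdnP [b' hb'].
set M := a' + b'.
have NM : N = 2 * M by rewrite /N /M ha' hb'; lia.
have M0 : 0 < M by lia.
have cop : gcdn a' M = 1.
  have : gcdn v1 N = 2 * gcdn a' M by rewrite NM ha' mulnC muln_gcdr.
  rewrite gN g2; lia.
have odd3 : odd v3 by rewrite -coprime2n /coprime -g2 hg.
have [al _ hal] := Bezoutl a' M0.
rewrite gcdnC cop in hal.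
set w := al * v3.
have [k [hk ht]] := key2 w M0.
have hr : N %/ 3 = (2 * M) %/ 3 by rewrite NM.
set t := (k * w) %% M.
set q := (k * w) %/ M.
set b : bool := t < (2 * M) %/ 3.
set e : bool := odd q != b.
have xb : forall x y : bool, x (+) (x != y) = y by case; case.
have hodd : odd (q + e * v3) = b by rewrite oddD oddM odd3 andbT oddb /e xb.
set h := (q + e * v3)./2.
have hqe : q + e * v3 = b + h * 2 by rewrite -{1}(odd_double_half (q + e * v3)) hodd -muln2.
have hq : k * w = q * M + t by rewrite /q /t -divn_eq.
have htM : t < M by rewrite /t ltn_pmod.
exists (k * al + e * M); split.
  have gk : goodn N (2 * k) by apply: good_small => //; rewrite NM.
  apply: (good_sym N0 _ gk).
  have -> : 2 * k + (k * al + e * M) * v1 = 2 * (k * (1 + al * a')) + (e * a') * N.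
    rewrite NM ha'; lia.
  apply/eqP; rewrite -/(dvdn N _) dvdn_addl; last exact: dvdn_mull (dvdnn N).
  rewrite NM dvdn_pmul2l //; exact: dvdn_mull hal.
have -> : (k * al + e * M) * v3 = h * N + (t + b * M).
  by rewrite NM (ar1 _ hq) (ar2 _ _ hqe).
have hb : b = (t < (2 * M) %/ 3) by [].
rewrite /goodn modnMDl modn_small; last first.
  rewrite NM; move: hb htM; case: (b) => /= _; lia.
rewrite hr NM; move: ht hb htM; rewrite -/t; case: (b) => /=; case: ltnP => hh //= ht hb htM. all: try discriminate. all: lia.
Qed.

Local Open Scope ring_scope.

Lemma natr_intr (n : nat) : ((n%:Z)%:~R : rat) = n%:R.
Proof. by []. Qed.

Lemma dist_frac (p : int) (N : nat) : (0 < N)%N ->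
  dist_nearest_int (p%:~R / N%:R) =
  Num.min (((p %% N)%Z)%:~R / N%:R) ((N%:Z - (p %% N)%Z)%:~R / N%:R).
Proof.
move=> N0.
have Nr : (0 : rat) < N%:R by rewrite ltr0n.
set t := (p %% N)%Z.
have t0 : 0 <= t by rewrite /t modz_ge0 // -lt0n.
have tN : t < N%:Z by rewrite /t ltz_pmod.
have e : p%:~R / N%:R = ((p %/ N)%Z)%:~R + t%:~R / N%:R :> rat.
  rewrite {1}(divz_eq p N) intrD intrM natr_intr mulrDl mulfK //.
  by rewrite lt0r_neq0.
have u0 : (0 : rat) <= t%:~R / N%:R by rewrite divr_ge0 // ?ler0z // ler0n.
have u1 : (t%:~R / N%:R : rat) < 1 by rewrite ltr_pdivrMr // mul1r -natr_intr ltr_int.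
have fl : Num.floor (p%:~R / N%:R : rat) = (p %/ N)%Z.
  have i1 : ((1 : int)%:~R : rat) = 1 by [].
  apply: floor_def; rewrite e intrD i1; apply/andP; split.
    by rewrite lerDl.
  by rewrite ltrD2l.
rewrite /dist_nearest_int fl e intrD.
have i1 : ((1 : int)%:~R : rat) = 1 by [].
rewrite i1; congr Num.min; first by rewrite addrAC subrr add0r.
rewrite intrB natr_intr; field.
by rewrite lt0r_neq0.
Qed.


Definition hh (N : nat) (t : int) : rat :=
  Num.min (t%:~R / N%:R) ((N%:Z - t)%:~R / N%:R).

Lemma lone_eq v1 v2 v3 m : (0 < v1 + v2)%N ->
  loneliness_at v1 v2 v3 m =
  Num.min (hh (v1 + v2) ((m * v1%:Z) %% (v1 + v2)%N)%Z)
   (Num.min (hh (v1 + v2) ((m * v2%:Z) %% (v1 + v2)%N)%Z)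
            (hh (v1 + v2) ((m * v3%:Z) %% (v1 + v2)%N)%Z)).
Proof.
move=> N0; rewrite /loneliness_at /hh.
have E : forall v : nat, m%:~R * v%:R = (m * v%:Z)%:~R :> rat.
  by move=> v; rewrite intrM natr_intr.
by rewrite !E !dist_frac.
Qed.

Lemma hh_ge0 N t : (0 < N)%N -> 0 <= t <= N%:Z -> 0 <= hh N t.
Proof.
move=> N0 /andP[t0 tN]; rewrite /hh le_min; apply/andP; split;
  apply: divr_ge0; rewrite ?ler0n // ler0z //; lia.
Qed.

Lemma hh_ge N (t r : nat) : (0 < N)%N -> (r <= t)%N -> (t <= N - r)%N ->
  r%:R / N%:R <= hh N t.
Proof.
move=> N0 h1 h2; rewrite /hh le_min; apply/andP; split;
  rewrite ler_pM2r ?invr_gt0 ?ltr0n //.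
  by rewrite natr_intr ler_nat.
have -> : (N%:Z - t%:Z) = (N - t)%N%:Z by lia.
by rewrite natr_intr ler_nat; lia.
Qed.

Lemma argmax (F : nat -> rat) n : exists i, (i <= n)%N /\ forall j, (j <= n)%N -> F j <= F i.
Proof.
elim: n => [|n [i [hi Hi]]]; first by exists 0%N; split => // j; rewrite leqn0 => /eqP ->.
case: (lerP (F n.+1) (F i)) => h.
  exists i; split; first lia.
  move=> j; rewrite leq_eqVlt ltnS; case/orP => [/eqP -> //|]; exact: Hi.
exists n.+1; split => // j; rewrite leq_eqVlt ltnS; case/orP => [/eqP -> //|hj].
by apply: le_trans (Hi j hj) (ltW h).
Qed.

Lemma min3_ge (z x y w : rat) : z <= x -> z <= y -> z <= w -> z <= Num.min x (Num.min y w).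
Proof. by move=> a b c; rewrite !le_min a b c. Qed.
Lemma min3_le (x y w : rat) : Num.min x (Num.min y w) <= w.
Proof. by rewrite !ge_min le_refl !orbT. Qed.
Lemma hh0 N : (0 < N)%N -> hh N 0 = 0.
Proof. by move=> N0; rewrite /hh mul0r subr0; apply/min_idPl; rewrite divr_ge0 ?ler0n. Qed.

Lemma lone_ge0 v1 v2 v3 m : (0 < v1 + v2)%N -> 0 <= loneliness_at v1 v2 v3 m.
Proof.
move=> N0; rewrite lone_eq //.
have H : forall v : int, 0 <= (v %% (v1 + v2)%N)%Z <= (v1 + v2)%N%:Z.
  move=> v; rewrite modz_ge0 ?ltW ?ltz_pmod //; timeout 10 lia.
by apply: min3_ge; apply: hh_ge0.
Qed.

Lemma lone_mod v1 v2 v3 m : (0 < v1 + v2)%N ->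
  loneliness_at v1 v2 v3 m = loneliness_at v1 v2 v3 ((m %% (v1 + v2)%N)%Z).
Proof.
by move=> N0; rewrite !lone_eq // !modzMml.
Qed.

Unset Implicit Arguments.
Theorem lemma7p1 (v1 v2 v3 : nat)
  (h1 : (0 < v1)%N) (h2 : (0 < v2)%N) (h3 : (0 < v3)%N)
  (hg : gcdn (gcdn v1 v2) v3 = 1%N)
  (h12 : (gcdn v1 v2 <= 2)%N) (h13 : (gcdn v1 v3 <= 2)%N)
  (h23 : (gcdn v2 v3 <= 2)%N) :
  (exists L : rat, is_max_loneliness v1 v2 v3 L) /\
  (forall L : rat, is_max_loneliness v1 v2 v3 L ->
     (((v1 + v2) %| v3)%N -> L = 0) /\
     (~~ ((v1 + v2) %| v3)%N ->
        ((v1 + v2) %/ 3)%N%:R / (v1 + v2)%N%:R <= L)).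
Proof.
have N0 : (0 < v1 + v2)%N by timeout 10 lia.
split.
  have [i [hi Hi]] := argmax (fun j : nat => loneliness_at v1 v2 v3 j%:Z) (v1 + v2).-1.
  exists (loneliness_at v1 v2 v3 i%:Z); split; first by exists i%:Z.
  move=> m; rewrite lone_mod //.
  have nz : (v1 + v2)%N%:Z != 0 by lia.
  have := modz_ge0 m nz; have := @ltz_pmod m (v1 + v2)%N ltac:(lia).
  case: (m %% (v1 + v2)%N)%Z => [n|n] hlt hge; last by [].
  apply: Hi; move: hlt N0; rewrite ltz_nat; timeout 10 lia.
move=> L [[m0 <-] Hmax]; split.
  move=> /dvdnP [q hq].
  apply/eqP; rewrite eq_le lone_ge0 // andbT.
  rewrite lone_eq //.
  have -> : ((m0 * v3%:Z) %% (v1 + v2)%N)%Z = 0.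
    by rewrite hq PoszM mulrA modzMl.
  by rewrite -(hh0 N0); apply: min3_le.
move=> hnd.
have [m [g1 [g2 g3]]] := comb h1 h2 hg h12 hnd.
apply: le_trans (Hmax m%:Z).
rewrite lone_eq // -!PoszM !modz_nat.
move: g1 g2 g3; rewrite /goodn => /andP[a1 b1] /andP[a2 b2] /andP[a3 b3].
by apply: min3_ge; apply: hh_ge.
Qed.
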